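(* Let $(L,[\cdot,\cdot],\{\cdot,\cdot,\cdot\},\alpha)$ be a Hom-Lie-Yamaguti algebra over a field $\mathbb{K}$. Then: (1) for every $f\in HomC^1(L,L)$, $\delta_I^2(\delta_I^1 f,\delta_{II}^1 f)=0$ and $\delta_{II}^2(\delta_{II}^1 f)=0$; (2) for every $f\in HomC^1(L,L)$, $d_I^2(\delta_I^1 f,\delta_{II}^1 f)=0$ and $d_{II}^2(\delta_I^1 f,\delta_{II}^1 f)=0$; (3) for every $(f,g)\in HomC^2(L,L)\times HomC^3(L,L)$, $\delta_I^3(\delta_I^2(f,g),\delta_{II}^2 g)=0$ and $\delta_{II}^3(\delta_{II}^2 g)=0$.
   Context: A Hom-Lie-Yamaguti algebra (HLYA) is a quadruple $(L,[\cdot,\cdot],\{\cdot,\cdot,\cdot\},\alpha)$ where $L$ is a vector space over a field $\mathbb{K}$, $[\cdot,\cdot]$ is a bilinear and $\{\cdot,\cdot,\cdot\}$ a trilinear operation on $L$ (written $[xy]$, $\{xyz\}$), and $\alpha:L\to L$ is linear, such that for all $x,y,z,u,v\in L$: $\alpha([xy])=[\alpha(x)\alpha(y)]$; $\alpha(\{xyz\})=\{\alpha(x)\alpha(y)\alpha(z)\}$; $[xx]=0$; $\{xxy\}=0$; $\circlearrowleft_{x,y,z}([[xy]\alpha(z)]+\{xyz\})=0$; $\circlearrowleft_{x,y,z}\{[xy]\alpha(z)\alpha(u)\}=0$; $\{\alpha(x)\alpha(y)[uv]\}=[\{xyu\}\alpha^2(v)]+[\alpha^2(u)\{xyv\}]$;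 $\{\alpha^2(u)\alpha^2(v)\{xyz\}\}=\{\{uvx\}\alpha^2(y)\alpha^2(z)\}+\{\alpha^2(x)\{uvy\}\alpha^2(z)\}+\{\alpha^2(x)\alpha^2(y)\{uvz\}\}$. Here $\circlearrowleft_{x,y,z}$ denotes the sum over cyclic permutations of $x,y,z$. For $n\ge1$, $HomC^n(L,L)$ is the set of $n$-linear maps $f:L^n\to L$ such that $f(x_1,\dots,x_n)=0$ whenever $x_{2i-1}=x_{2i}$ for some $i$ (with $2i\le n$), and $f(\alpha(x_1),\dots,\alpha(x_n))=\alpha(f(x_1,\dots,x_n))$. Coboundary operators: For $f\in HomC^1(L,L)$: $\delta_I^1 f(x,y)=[xf(y)]+[f(x)y]-f([xy])$, $\delta_{II}^1 f(x,y,z)=\{f(x)yz\}+\{xf(y)z\}+\{xyf(z)\}-f(\{xyz\})$. For $f\in HomC^2(L,L)$, $g\in HomC^3(L,L)$: $\delta_I^2(f,g)(x,y,z,u)=\{\alpha(x)\alpha(y)f(z,u)\}-f(\{xyz\},\alpha^2(u))-f(\alpha^2(z),\{xyu\})+g(\alpha(x),\alpha(y),[zu])-[\alpha^2(z)g(x,y,u)]-[g(x,y,z)\alpha^2(u)]$; $\delta_{II}^2 g(x,y,u,v,w)=\{\alpha^2(x)\alpha^2(y)g(u,v,w)\}-\{g(x,y,u)\alpha^2(v)\alpha^2(w)\}-\{\alpha^2(u)g(x,y,v)\alpha^2(w)\}-\{\alpha^2(u)\alpha^2(v)g(x,y,w)\}+g(\alpha^2(x),\alpha^2(y),\{uvw\})-g(\{xyu\},\alpha^2(v),\alpha^2(w))-g(\alpha^2(u),\{xyv\},\alpha^2(w))-g(\alpha^2(u),\alpha^2(v),\{xyw\})$;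 $d_I^2(f,g)(x,y,z)=\circlearrowleft_{x,y,z}\big([f(x,y)\alpha(z)]+f([xy],\alpha(z))+g(x,y,z)\big)$; $d_{II}^2(f,g)(x,y,z,u)=\circlearrowleft_{x,y,z}\big(\{f(x,y)\alpha(z)\alpha(u)\}+g([xy],\alpha(z),\alpha(u))\big)$. For $f\in HomC^4(L,L)$, $g\in HomC^5(L,L)$: $\delta_I^3(f,g)(x_1,\dots,x_6)=\{\alpha^3(x_1)\alpha^3(x_2)f(x_3,x_4,x_5,x_6)\}-\{\alpha^3(x_3)\alpha^3(x_4)f(x_1,x_2,x_5,x_6)\}+\sum_{k=1}^2\sum_{i=2k+1}^6(-1)^k f(\alpha^2(x_1),\dots,\widehat{\alpha^2(x_{2k-1})},\widehat{\alpha^2(x_{2k})},\dots,\{x_{2k-1}x_{2k}x_i\},\dots,\alpha^2(x_6))-g(\alpha(x_1),\dots,\alpha(x_4),[x_5x_6])+[\alpha^4(x_5)g(x_1,\dots,x_4,x_6)]+[g(x_1,\dots,x_5)\alpha^4(x_6)]$, $\delta_{II}^3 g(x_1,\dots,x_7)=\sum_{k=1}^3(-1)^{k+1}\{\alpha^4(x_{2k-1})\alpha^4(x_{2k})g(x_1,\dots,\widehat{x_{2k-1}},\widehat{x_{2k}},\dots,x_7)\}+\sum_{k=1}^3\sum_{i=2k+1}^7(-1)^k g(\alpha^2(x_1),\dots,\widehat{\alpha^2(x_{2k-1})},\widehat{\alpha^2(x_{2k})},\dots,\{x_{2k-1}x_{2k}x_i\},\dots,\alpha^2(x_7))+\{g(x_1,\dots,x_5)\alpha^4(x_6)\alpha^4(x_7)\}-\{g(x_1,\dots,x_4,x_6)\alpha^4(x_5)\alpha^4(x_7)\}$.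 A hat means the entry is omitted; in the double sums the arguments are $\alpha^2(x_j)$ for all $j\notin\{2k-1,2k\}$ in increasing order, except that the entry in the position of $x_i$ is replaced by $\{x_{2k-1}x_{2k}x_i\}$. *)

(* Defs.v *)
From HB Require Import structures.
From mathcomp Require Import all_boot all_order all_algebra.
Set Implicit Arguments. Unset Strict Implicit. Unset Printing Implicit Defensive.
Import GRing.Theory.
Local Open Scope ring_scope.

Section HLYA.
Variables (K : fieldType) (L : lmodType K).
Variables (br : L -> L -> L) (tr : L -> L -> L -> L) (al : L -> L).

(* [x y] is [br x y], {x y z} is [tr x y z], alpha^n x is [iter n al x]. *)

Definition lin1 (f : L -> L) := forall (a : K) (x y : L), f (a *: x + y) = a *: f x + f y.

Definition ml2 (f : L -> L -> L) :=
  (forall y, lin1 (fun x => f x y)) /\ (forall x, lin1 (fun y => f x y)).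
Definition ml3 (f : L -> L -> L -> L) :=
  [/\ forall y z, lin1 (fun x => f x y z), forall x z, lin1 (fun y => f x y z)
    & forall x y, lin1 (fun z => f x y z)].
Definition ml4 (f : L -> L -> L -> L -> L) :=
  [/\ forall x2 x3 x4, lin1 (fun x1 => f x1 x2 x3 x4),
      forall x1 x3 x4, lin1 (fun x2 => f x1 x2 x3 x4),
      forall x1 x2 x4, lin1 (fun x3 => f x1 x2 x3 x4)
    & forall x1 x2 x3, lin1 (fun x4 => f x1 x2 x3 x4)].
Definition ml5 (f : L -> L -> L -> L -> L -> L) :=
  [/\ forall x2 x3 x4 x5, lin1 (fun x1 => f x1 x2 x3 x4 x5),
      forall x1 x3 x4 x5, lin1 (fun x2 => f x1 x2 x3 x4 x5),
      forall x1 x2 x4 x5, lin1 (fun x3 => f x1 x2 x3 x4 x5),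
      forall x1 x2 x3 x5, lin1 (fun x4 => f x1 x2 x3 x4 x5)
    & forall x1 x2 x3 x4, lin1 (fun x5 => f x1 x2 x3 x4 x5)].

Definition HLYA : Prop :=
  lin1 al /\ ml2 br /\ ml3 tr /\
  (forall x y, al (br x y) = br (al x) (al y)) /\
  (forall x y z, al (tr x y z) = tr (al x) (al y) (al z)) /\
  (forall x, br x x = 0) /\
  (forall x y, tr x x y = 0) /\
  (forall x y z,
      (br (br x y) (al z) + tr x y z) + (br (br y z) (al x) + tr y z x)
      + (br (br z x) (al y) + tr z x y) = 0) /\
  (forall x y z u,
      tr (br x y) (al z) (al u) + tr (br y z) (al x) (al u)
      + tr (br z x) (al y) (al u) = 0) /\
  (forall x y u v,
      tr (al x) (al y) (br u v)
      = br (tr x y u) (iter 2 al v) + br (iter 2 al u) (tr x y v)) /\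
  (forall x y z u v,
      tr (iter 2 al u) (iter 2 al v) (tr x y z)
      = tr (tr u v x) (iter 2 al y) (iter 2 al z)
        + tr (iter 2 al x) (tr u v y) (iter 2 al z)
        + tr (iter 2 al x) (iter 2 al y) (tr u v z)).

Definition HomC1 (f : L -> L) := lin1 f /\ (forall x, f (al x) = al (f x)).
Definition HomC2 (f : L -> L -> L) :=
  [/\ ml2 f, (forall x, f x x = 0) & (forall x y, f (al x) (al y) = al (f x y))].
Definition HomC3 (f : L -> L -> L -> L) :=
  [/\ ml3 f, (forall x y, f x x y = 0)
    & (forall x y z, f (al x) (al y) (al z) = al (f x y z))].
Definition HomC4 (f : L -> L -> L -> L -> L) :=
  [/\ ml4 f, (forall x y z, f x x y z = 0), (forall x y z, f x y z z = 0)
    & (forall x1 x2 x3 x4, f (al x1) (al x2) (al x3) (al x4) = al (f x1 x2 x3 x4))].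
Definition HomC5 (f : L -> L -> L -> L -> L -> L) :=
  [/\ ml5 f, (forall x y z w, f x x y z w = 0), (forall x y z w, f x y z z w = 0)
    & (forall x1 x2 x3 x4 x5,
        f (al x1) (al x2) (al x3) (al x4) (al x5) = al (f x1 x2 x3 x4 x5))].

Definition deltaI1 (f : L -> L) : L -> L -> L :=
  fun x y => br x (f y) + br (f x) y - f (br x y).
Definition deltaII1 (f : L -> L) : L -> L -> L -> L :=
  fun x y z => tr (f x) y z + tr x (f y) z + tr x y (f z) - f (tr x y z).

Definition deltaI2 (f : L -> L -> L) (g : L -> L -> L -> L) : L -> L -> L -> L -> L :=
  fun x y z u =>
    tr (al x) (al y) (f z u) - f (tr x y z) (iter 2 al u) - f (iter 2 al z) (tr x y u)
    + g (al x) (al y) (br z u) - br (iter 2 al z) (g x y u) - br (g x y z) (iter 2 al u).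

Definition deltaII2 (g : L -> L -> L -> L) : L -> L -> L -> L -> L -> L :=
  fun x y u v w =>
    tr (iter 2 al x) (iter 2 al y) (g u v w)
    - tr (g x y u) (iter 2 al v) (iter 2 al w)
    - tr (iter 2 al u) (g x y v) (iter 2 al w)
    - tr (iter 2 al u) (iter 2 al v) (g x y w)
    + g (iter 2 al x) (iter 2 al y) (tr u v w)
    - g (tr x y u) (iter 2 al v) (iter 2 al w)
    - g (iter 2 al u) (tr x y v) (iter 2 al w)
    - g (iter 2 al u) (iter 2 al v) (tr x y w).

Definition dI2 (f : L -> L -> L) (g : L -> L -> L -> L) : L -> L -> L -> L :=
  fun x y z =>
    (br (f x y) (al z) + f (br x y) (al z) + g x y z)
    + (br (f y z) (al x) + f (br y z) (al x) + g y z x)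
    + (br (f z x) (al y) + f (br z x) (al y) + g z x y).

Definition dII2 (f : L -> L -> L) (g : L -> L -> L -> L) : L -> L -> L -> L -> L :=
  fun x y z u =>
    (tr (f x y) (al z) (al u) + g (br x y) (al z) (al u))
    + (tr (f y z) (al x) (al u) + g (br y z) (al x) (al u))
    + (tr (f z x) (al y) (al u) + g (br z x) (al y) (al u)).

(* the double sums are written out explicitly:
   k = 1 (sign -1): i = 3..6 ;  k = 2 (sign +1): i = 5,6 *)
Definition deltaI3 (f : L -> L -> L -> L -> L) (g : L -> L -> L -> L -> L -> L)
  : L -> L -> L -> L -> L -> L -> L :=
  fun x1 x2 x3 x4 x5 x6 =>
    tr (iter 3 al x1) (iter 3 al x2) (f x3 x4 x5 x6)
    - tr (iter 3 al x3) (iter 3 al x4) (f x1 x2 x5 x6)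
    - f (tr x1 x2 x3) (iter 2 al x4) (iter 2 al x5) (iter 2 al x6)
    - f (iter 2 al x3) (tr x1 x2 x4) (iter 2 al x5) (iter 2 al x6)
    - f (iter 2 al x3) (iter 2 al x4) (tr x1 x2 x5) (iter 2 al x6)
    - f (iter 2 al x3) (iter 2 al x4) (iter 2 al x5) (tr x1 x2 x6)
    + f (iter 2 al x1) (iter 2 al x2) (tr x3 x4 x5) (iter 2 al x6)
    + f (iter 2 al x1) (iter 2 al x2) (iter 2 al x5) (tr x3 x4 x6)
    - g (al x1) (al x2) (al x3) (al x4) (br x5 x6)
    + br (iter 4 al x5) (g x1 x2 x3 x4 x6)
    + br (g x1 x2 x3 x4 x5) (iter 4 al x6).

(* first sum: k = 1,2,3 with signs +,-,+ ;
   double sum: k = 1 (sign -1): i = 3..7 ; k = 2 (sign +1): i = 5..7 ;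
   k = 3 (sign -1): i = 7 *)
Definition deltaII3 (g : L -> L -> L -> L -> L -> L)
  : L -> L -> L -> L -> L -> L -> L -> L :=
  fun x1 x2 x3 x4 x5 x6 x7 =>
    tr (iter 4 al x1) (iter 4 al x2) (g x3 x4 x5 x6 x7)
    - tr (iter 4 al x3) (iter 4 al x4) (g x1 x2 x5 x6 x7)
    + tr (iter 4 al x5) (iter 4 al x6) (g x1 x2 x3 x4 x7)
    - g (tr x1 x2 x3) (iter 2 al x4) (iter 2 al x5) (iter 2 al x6) (iter 2 al x7)
    - g (iter 2 al x3) (tr x1 x2 x4) (iter 2 al x5) (iter 2 al x6) (iter 2 al x7)
    - g (iter 2 al x3) (iter 2 al x4) (tr x1 x2 x5) (iter 2 al x6) (iter 2 al x7)
    - g (iter 2 al x3) (iter 2 al x4) (iter 2 al x5) (tr x1 x2 x6) (iter 2 al x7)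
    - g (iter 2 al x3) (iter 2 al x4) (iter 2 al x5) (iter 2 al x6) (tr x1 x2 x7)
    + g (iter 2 al x1) (iter 2 al x2) (tr x3 x4 x5) (iter 2 al x6) (iter 2 al x7)
    + g (iter 2 al x1) (iter 2 al x2) (iter 2 al x5) (tr x3 x4 x6) (iter 2 al x7)
    + g (iter 2 al x1) (iter 2 al x2) (iter 2 al x5) (iter 2 al x6) (tr x3 x4 x7)
    - g (iter 2 al x1) (iter 2 al x2) (iter 2 al x3) (iter 2 al x4) (tr x5 x6 x7)
    + tr (g x1 x2 x3 x4 x5) (iter 4 al x6) (iter 4 al x7)
    - tr (g x1 x2 x3 x4 x6) (iter 4 al x5) (iter 4 al x7).

End HLYA.

(* Main.v *)
From HB Require Import structures.
From mathcomp Require Import all_boot all_order all_algebra ring.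
Require Import Defs.
Set Implicit Arguments. Unset Strict Implicit.
Import GRing.Theory.
Local Open Scope ring_scope.

Section TE.
Variable Z : zmodType.
Definition TE := (int * Z)%type.
HB.instance Definition _ := GRing.Zmodule.on TE.
Definition te_one : TE := (1, 0).
Definition te_mul (a b : TE) : TE := (a.1 * b.1, a.2 *~ b.1 + b.2 *~ a.1).
Lemma te_mulA : associative te_mul.
Proof. move=> [a x] [b y] [c z]; rewrite /te_mul /=; congr pair; first by rewrite mulrA.
by rewrite !mulrzDl -!mulrzA (mulrC c a) (mulrC b a) addrA. Qed.
Lemma te_mulC : commutative te_mul.
Proof. move=> [a x] [b y]; rewrite /te_mul /=; congr pair; [exact: mulrC|exact: addrC]. Qed.
Lemma te_mul1 : left_id te_one te_mul.
Proof. move=> [a x]; rewrite /te_mul /=; congr pair; [exact: mul1r|by rewrite mul0rz add0r]. Qed.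
Lemma te_mulDl : left_distributive te_mul +%R.
Proof. move=> [a x] [b y] [c z]; rewrite /te_mul /=; congr pair; first by rewrite mulrDl.
by rewrite mulrzDl mulrzDr addrACA. Qed.
HB.instance Definition _ := GRing.Zmodule_isComPzRing.Build TE te_mulA te_mulC te_mul1 te_mulDl.
Definition iota (x : Z) : TE := (0, x).
Lemma iotaB : {morph iota : x y / x - y}. Proof. by move=> x y; rewrite /iota; congr pair; rewrite subr0. Qed.
Lemma iotaD : {morph iota : x y / x + y}. Proof. by move=> x y; rewrite /iota; congr pair; rewrite addr0. Qed.
Lemma iotaN : {morph iota : x / - x}. Proof. by move=> x; rewrite /iota; congr pair; rewrite oppr0. Qed.
Lemma iota0 : iota 0 = 0. Proof. by []. Qed.
Lemma iotaMz x k : iota (x *~ k) = iota x *~ k.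
Proof. have H n : iota (x *+ n) = iota x *+ n.
  by elim: n => [|n IH]; rewrite ?mulr0n ?iota0 // !mulrS iotaD IH.
case: k => n; first exact: H. by rewrite NegzE !mulrNz iotaN H. Qed.
End TE.


Lemma iota_inj (Z : zmodType) : injective (@iota Z). Proof. by move=> x y [->]. Qed.
Lemma use_pos (Z : zmodType) (P Q E : Z) : P = Q -> E - (P - Q) = 0 -> E = 0.
Proof. by move=> ->; rewrite subrr subr0. Qed.
Lemma use_neg (Z : zmodType) (P Q E : Z) : P = Q -> E + (P - Q) = 0 -> E = 0.
Proof. by move=> ->; rewrite subrr addr0. Qed.
Lemma lin1D (K : fieldType) (L : lmodType K) (f : L -> L) : lin1 f -> forall x y, f (x + y) = f x + f y.
Proof. by move=> h x y; have := h 1 x y; rewrite !scale1r. Qed.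
Lemma lin10 (K : fieldType) (L : lmodType K) (f : L -> L) : lin1 f -> f 0 = 0.
Proof. move=> h; have e := lin1D h 0 0; rewrite addr0 in e.
by apply: (@addrI _ (f 0)); rewrite addr0 -e. Qed.
Lemma lin1N (K : fieldType) (L : lmodType K) (f : L -> L) : lin1 f -> forall x, f (- x) = - f x.
Proof. move=> h x; apply/eqP; rewrite -subr_eq0 opprK -(lin1D h) addNr (lin10 h) //. Qed.
Lemma antisym (Z : zmodType) (h : Z -> Z -> Z) :
  (forall x y z, h (x + y) z = h x z + h y z) -> (forall x y z, h x (y + z) = h x y + h x z) ->
  (forall x, h x x = 0) -> forall x y, h x y = - h y x.
Proof. move=> hl hr hxx x y; have := hxx (x + y).
by rewrite hl !hr !hxx add0r addr0 => /eqP; rewrite addr_eq0 => /eqP. Qed.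

Section S.
Variables (K : fieldType) (L : lmodType K) (br : L -> L -> L) (tr : L -> L -> L -> L) (al : L -> L).
Hypothesis H : HLYA br tr al.
Ltac dH := case: H => hal [[hb1 hb2] [[ht1 ht2 ht3] [hab [hat [hbxx [htxx [hcb [hct [hlb hlt]]]]]]]]].
Lemma Hcbr x y z : (br (br x y) (al z) + tr x y z) + (br (br y z) (al x) + tr y z x)
      + (br (br z x) (al y) + tr z x y) = 0. Proof. by dH; apply: hcb. Qed.
Lemma Hctr x y z u : tr (br x y) (al z) (al u) + tr (br y z) (al x) (al u)
      + tr (br z x) (al y) (al u) = 0. Proof. by dH; apply: hct. Qed.
Lemma Hlbr x y u v : tr (al x) (al y) (br u v)
      = br (tr x y u) (iter 2 al v) + br (iter 2 al u) (tr x y v). Proof. by dH; apply: hlb. Qed.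
Lemma Hltr x y z u v : tr (iter 2 al u) (iter 2 al v) (tr x y z)
      = tr (tr u v x) (iter 2 al y) (iter 2 al z)
        + tr (iter 2 al x) (tr u v y) (iter 2 al z)
        + tr (iter 2 al x) (iter 2 al y) (tr u v z). Proof. by dH; apply: hlt. Qed.
Lemma alD x y : al (x + y) = al x + al y. Proof. by dH; apply: lin1D. Qed.
Lemma al0 : al 0 = 0. Proof. by dH; apply: lin10. Qed.
Lemma alN x : al (- x) = - al x. Proof. by dH; apply: lin1N. Qed.
Lemma albr x y : al (br x y) = br (al x) (al y). Proof. by dH; apply: hab. Qed.
Lemma altr x y z : al (tr x y z) = tr (al x) (al y) (al z). Proof. by dH; apply: hat. Qed.
Lemma brDl x y z : br (x + y) z = br x z + br y z. Proof. by dH; apply: (lin1D (hb1 z)). Qed.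
Lemma brDr x y z : br z (x + y) = br z x + br z y. Proof. by dH; apply: (lin1D (hb2 z)). Qed.
Lemma brNl x z : br (- x) z = - br x z. Proof. by dH; apply: (lin1N (hb1 z)). Qed.
Lemma brNr x z : br z (- x) = - br z x. Proof. by dH; apply: (lin1N (hb2 z)). Qed.
Lemma br0l z : br 0 z = 0. Proof. by dH; apply: (lin10 (hb1 z)). Qed.
Lemma br0r z : br z 0 = 0. Proof. by dH; apply: (lin10 (hb2 z)). Qed.
Lemma trD1 x y a b : tr (x + y) a b = tr x a b + tr y a b. Proof. by dH; apply: (lin1D (ht1 a b)). Qed.
Lemma trD2 x y a b : tr a (x + y) b = tr a x b + tr a y b. Proof. by dH; apply: (lin1D (ht2 a b)). Qed.
Lemma trD3 x y a b : tr a b (x + y) = tr a b x + tr a b y. Proof. by dH; apply: (lin1D (ht3 a b)). Qed.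
Lemma trN1 x a b : tr (- x) a b = - tr x a b. Proof. by dH; apply: (lin1N (ht1 a b)). Qed.
Lemma trN2 x a b : tr a (- x) b = - tr a x b. Proof. by dH; apply: (lin1N (ht2 a b)). Qed.
Lemma trN3 x a b : tr a b (- x) = - tr a b x. Proof. by dH; apply: (lin1N (ht3 a b)). Qed.
Lemma tr01 a b : tr 0 a b = 0. Proof. by dH; apply: (lin10 (ht1 a b)). Qed.
Lemma tr02 a b : tr a 0 b = 0. Proof. by dH; apply: (lin10 (ht2 a b)). Qed.
Lemma tr03 a b : tr a b 0 = 0. Proof. by dH; apply: (lin10 (ht3 a b)). Qed.
Lemma brxx x : br x x = 0. Proof. by dH; apply: hbxx. Qed.
Lemma trxx x c : tr x x c = 0. Proof. by dH; apply: htxx. Qed.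
Lemma brA x y : br x y = - br y x. Proof. exact: (antisym brDl (fun x y z => brDr y z x) brxx). Qed.
Lemma trA x y c : tr x y c = - tr y x c.
Proof. exact: (@antisym _ (fun x y => tr x y c) (fun x y z => trD1 x y z c) (fun x y z => trD2 y z x c) (fun x => trxx x c)). Qed.

Lemma p1a (f : L -> L) : HomC1 al f -> forall x y z u, deltaI2 br tr al (deltaI1 br f) (deltaII1 tr f) x y z u = 0.
Proof.
move=> [fl fal] x y z u.
have fD : forall a b, f (a + b) = f a + f b := lin1D fl.
have fN : forall a, f (- a) = - f a := lin1N fl.
have f0 : f 0 = 0 := lin10 fl.
have falr : forall a, al (f a) = f (al a) := fun a => esym (fal a).
rewrite /deltaI2 /deltaI1 /deltaII1 /=.
apply: (use_pos (Hlbr x y z (f u))).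
apply: (use_neg (Hlbr x y u (f z))).
apply: (use_pos (congr1 (fun w => (f w)) (Hlbr x y u z))).
apply: (use_neg (Hlbr (f x) y u z)).
apply: (use_pos (Hlbr (f y) x u z)).
rewrite /=.
rewrite ?(brDl, brDr, brNl, brNr, br0l, br0r, trD1, trD2, trD3, trN1, trN2, trN3, tr01, tr02, tr03, alD, alN, al0, albr, altr, fD, fN, f0, falr).
rewrite ?(brA z u).
rewrite ?(brDl, brDr, brNl, brNr, br0l, br0r, trD1, trD2, trD3, trN1, trN2, trN3, tr01, tr02, tr03, alD, alN, al0, albr, altr, fD, fN, f0, falr).
rewrite ?(brA (al (al u)) (tr x y z)) ?(brA (al (al z)) (tr x y u)) ?(brA (tr x y u) (f (al (al z)))) ?(brA (tr x y z) (f (al (al u)))) ?(brA u (f z)) ?(brA z (f u)) ?(trA (al x) (f (al y)) (br u z)) ?(trA x (f y) u) ?(trA x (f y) z).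
rewrite ?(brDl, brDr, brNl, brNr, br0l, br0r, trD1, trD2, trD3, trN1, trN2, trN3, tr01, tr02, tr03, alD, alN, al0, albr, altr, fD, fN, f0, falr).
rewrite ?(brA (al (al u)) (tr (f x) y z)) ?(brA (al (al u)) (tr (f y) x z)) ?(brA (al (al u)) (tr x y (f z))) ?(brA (al (al z)) (tr (f x) y u)) ?(brA (al (al z)) (tr (f y) x u)) ?(brA (al (al z)) (tr x y (f u))).
rewrite ?(brDl, brDr, brNl, brNr, br0l, br0r, trD1, trD2, trD3, trN1, trN2, trN3, tr01, tr02, tr03, alD, alN, al0, albr, altr, fD, fN, f0, falr).
apply: (@iota_inj L); rewrite ?(iotaD, iotaN, iota0).
ring.
Qed.

Lemma p1b (f : L -> L) : HomC1 al f -> forall x y u v w, deltaII2 tr al (deltaII1 tr f) x y u v w = 0.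
Proof.
move=> [fl fal] x y u v w.
have fD : forall a b, f (a + b) = f a + f b := lin1D fl.
have fN : forall a, f (- a) = - f a := lin1N fl.
have f0 : f 0 = 0 := lin10 fl.
have falr : forall a, al (f a) = f (al a) := fun a => esym (fal a).
rewrite /deltaII2 /deltaII1 /=.
apply: (use_pos (Hltr u v w (f x) y)).
apply: (use_neg (Hltr u v w (f y) x)).
apply: (use_pos (Hltr u (f v) w x y)).
apply: (use_neg (Hltr v u (f w) x y)).
apply: (use_pos (congr1 (fun w => (f w)) (Hltr v u w x y))).
apply: (use_pos (Hltr (f u) v w x y)).
rewrite /=.
rewrite ?(brDl, brDr, brNl, brNr, br0l, br0r, trD1, trD2, trD3, trN1, trN2, trN3, tr01, tr02, tr03, alD, alN, al0, albr, altr, fD, fN, f0, falr).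
rewrite ?(trA v u w).
rewrite ?(brDl, brDr, brNl, brNr, br0l, br0r, trD1, trD2, trD3, trN1, trN2, trN3, tr01, tr02, tr03, alD, alN, al0, albr, altr, fD, fN, f0, falr).
rewrite ?(trA (al (al u)) (f (al (al v))) (tr x y w)) ?(trA (al (al u)) (tr x y v) (al (al w))) ?(trA (al (al u)) (tr x y v) (f (al (al w)))) ?(trA (al (al v)) (al (al u)) (tr x y w)) ?(trA (al (al v)) (tr x y u) (al (al w))) ?(trA (al (al v)) (tr x y u) (f (al (al w)))) ?(trA (al (al x)) (f (al (al y))) (tr u v w)) ?(trA (tr x y u) (f (al (al v))) (al (al w))) ?(trA u (f v) w) ?(trA v u (f w)) ?(trA x (f y) u) ?(trA x (f y) v) ?(trA x (f y) w).
rewrite ?(brDl, brDr, brNl, brNr, br0l, br0r, trD1, trD2, trD3, trN1, trN2, trN3, tr01, tr02, tr03, alD, alN, al0, albr, altr, fD, fN, f0, falr).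
rewrite ?(trA (al (al u)) (tr (f x) y v) (al (al w))) ?(trA (al (al u)) (tr (f y) x v) (al (al w))) ?(trA (al (al u)) (tr x y (f v)) (al (al w))) ?(trA (al (al v)) (al (al u)) (tr x y (f w))).
rewrite ?(brDl, brDr, brNl, brNr, br0l, br0r, trD1, trD2, trD3, trN1, trN2, trN3, tr01, tr02, tr03, alD, alN, al0, albr, altr, fD, fN, f0, falr).
apply: (@iota_inj L); rewrite ?(iotaD, iotaN, iota0).
ring.
Qed.

Lemma p2a (f : L -> L) : HomC1 al f -> forall x y z, dI2 br al (deltaI1 br f) (deltaII1 tr f) x y z = 0.
Proof.
move=> [fl fal] x y z.
have fD : forall a b, f (a + b) = f a + f b := lin1D fl.
have fN : forall a, f (- a) = - f a := lin1N fl.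
have f0 : f 0 = 0 := lin10 fl.
have falr : forall a, al (f a) = f (al a) := fun a => esym (fal a).
rewrite /dI2 /deltaI1 /deltaII1 /=.
apply: (use_neg (Hcbr x z (f y))).
apply: (use_pos (Hcbr (f x) y z)).
apply: (use_pos (congr1 (fun w => (f w)) (Hcbr x z y))).
apply: (use_pos (Hcbr (f z) x y)).
rewrite /=.
rewrite ?(brDl, brDr, brNl, brNr, br0l, br0r, trD1, trD2, trD3, trN1, trN2, trN3, tr01, tr02, tr03, alD, alN, al0, albr, altr, fD, fN, f0, falr).
rewrite ?(brA y x) ?(brA z x) ?(brA z y) ?(trA y x z) ?(trA z x y) ?(trA z y x).
rewrite ?(brDl, brDr, brNl, brNr, br0l, br0r, trD1, trD2, trD3, trN1, trN2, trN3, tr01, tr02, tr03, alD, alN, al0, albr, altr, fD, fN, f0, falr).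
rewrite ?(brA x (f y)) ?(brA y (f z)) ?(brA z (f x)) ?(brA z (f y)) ?(trA x (f y) z) ?(trA y (f z) x) ?(trA z (f x) y) ?(trA z (f y) x) ?(trA z x (f y)).
rewrite ?(brDl, brDr, brNl, brNr, br0l, br0r, trD1, trD2, trD3, trN1, trN2, trN3, tr01, tr02, tr03, alD, alN, al0, albr, altr, fD, fN, f0, falr).
apply: (@iota_inj L); rewrite ?(iotaD, iotaN, iota0).
ring.
Qed.

Lemma p2b (f : L -> L) : HomC1 al f -> forall x y z u, dII2 br tr al (deltaI1 br f) (deltaII1 tr f) x y z u = 0.
Proof.
move=> [fl fal] x y z u.
have fD : forall a b, f (a + b) = f a + f b := lin1D fl.
have fN : forall a, f (- a) = - f a := lin1N fl.
have f0 : f 0 = 0 := lin10 fl.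
have falr : forall a, al (f a) = f (al a) := fun a => esym (fal a).
rewrite /dII2 /deltaI1 /deltaII1 /=.
apply: (use_neg (Hctr (f y) x z u)).
apply: (use_pos (Hctr (f x) y z u)).
apply: (use_pos (Hctr y z x (f u))).
apply: (use_neg (congr1 (fun w => (f w)) (Hctr x y z u))).
apply: (use_pos (Hctr x y (f z) u)).
rewrite /=.
rewrite ?(brDl, brDr, brNl, brNr, br0l, br0r, trD1, trD2, trD3, trN1, trN2, trN3, tr01, tr02, tr03, alD, alN, al0, albr, altr, fD, fN, f0, falr).
rewrite ?(brA z x).
rewrite ?(brDl, brDr, brNl, brNr, br0l, br0r, trD1, trD2, trD3, trN1, trN2, trN3, tr01, tr02, tr03, alD, alN, al0, albr, altr, fD, fN, f0, falr).
rewrite ?(brA x (f y)) ?(brA y (f z)) ?(brA z (f x)) ?(brA z (f y)).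
rewrite ?(brDl, brDr, brNl, brNr, br0l, br0r, trD1, trD2, trD3, trN1, trN2, trN3, tr01, tr02, tr03, alD, alN, al0, albr, altr, fD, fN, f0, falr).
apply: (@iota_inj L); rewrite ?(iotaD, iotaN, iota0).
ring.
Qed.

Lemma p3a (f : L -> L -> L) (g : L -> L -> L -> L) : HomC2 al f -> HomC3 al g -> forall x1 x2 x3 x4 x5 x6, deltaI3 br tr al (deltaI2 br tr al f g) (deltaII2 tr al g) x1 x2 x3 x4 x5 x6 = 0.
Proof.
move=> [[f1 f2] fxx fal] [[g1 g2 g3] gxx gal] x1 x2 x3 x4 x5 x6.
have fD1 : forall a b c, f (a + b) c = f a c + f b c := fun a b c => lin1D (f1 c) a b.
have fD2 : forall a b c, f c (a + b) = f c a + f c b := fun a b c => lin1D (f2 c) a b.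
have fN1 : forall a c, f (- a) c = - f a c := fun a c => lin1N (f1 c) a.
have fN2 : forall a c, f c (- a) = - f c a := fun a c => lin1N (f2 c) a.
have f01 : forall c, f 0 c = 0 := fun c => lin10 (f1 c).
have f02 : forall c, f c 0 = 0 := fun c => lin10 (f2 c).
have falr : forall a b, al (f a b) = f (al a) (al b) := fun a b => esym (fal a b).
have fA : forall a b, f a b = - f b a := antisym fD1 (fun a b c => fD2 b c a) fxx.
have gD1 : forall a b c d, g (a + b) c d = g a c d + g b c d := fun a b c d => lin1D (g1 c d) a b.
have gD2 : forall a b c d, g c (a + b) d = g c a d + g c b d := fun a b c d => lin1D (g2 c d) a b.
have gD3 : forall a b c d, g c d (a + b) = g c d a + g c d b := fun a b c d => lin1D (g3 c d) a b.
have gN1 : forall a c d, g (- a) c d = - g a c d := fun a c d => lin1N (g1 c d) a.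
have gN2 : forall a c d, g c (- a) d = - g c a d := fun a c d => lin1N (g2 c d) a.
have gN3 : forall a c d, g c d (- a) = - g c d a := fun a c d => lin1N (g3 c d) a.
have g01 : forall c d, g 0 c d = 0 := fun c d => lin10 (g1 c d).
have g02 : forall c d, g c 0 d = 0 := fun c d => lin10 (g2 c d).
have g03 : forall c d, g c d 0 = 0 := fun c d => lin10 (g3 c d).
have galr : forall a b c, al (g a b c) = g (al a) (al b) (al c) := fun a b c => esym (gal a b c).
have gA : forall a b c, g a b c = - g b a c :=
  fun a b c => @antisym _ (fun x y => g x y c) (fun x y z => gD1 x y z c) (fun x y z => gD2 y z x c) (fun x => gxx x c) a b.
rewrite /deltaI3 /deltaI2 /deltaII2 /=.
apply: (use_pos (Hltr (al x3) (al x4) (f x5 x6) (al x1) (al x2))).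
apply: (use_neg (congr1 (fun w => (f w (al (al (al (al x6)))))) (Hltr x3 x4 x5 x1 x2))).
apply: (use_neg (congr1 (fun w => (f w (al (al (al (al x5)))))) (Hltr x4 x3 x6 x1 x2))).
apply: (use_pos (congr1 (fun w => (g (al (al (al x3))) (al (al (al x4))) w)) (Hlbr x1 x2 x5 x6))).
apply: (use_pos (Hlbr (al (al x1)) (al (al x2)) (g x3 x4 x6) (al (al x5)))).
apply: (use_neg (Hlbr (al (al x1)) (al (al x2)) (g x3 x4 x5) (al (al x6)))).
apply: (use_neg (congr1 (fun w => (g (al (al (al x1))) (al (al (al x2))) w)) (Hlbr x3 x4 x5 x6))).
apply: (use_neg (Hlbr (al (al x3)) (al (al x4)) (g x1 x2 x6) (al (al x5)))).
apply: (use_pos (Hlbr (al (al x3)) (al (al x4)) (g x1 x2 x5) (al (al x6)))).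
apply: (use_pos (Hlbr (g x1 x2 x3) (al (al x4)) (al (al x5)) (al (al x6)))).
apply: (use_neg (Hlbr (g x1 x2 x4) (al (al x3)) (al (al x5)) (al (al x6)))).
rewrite /=.
rewrite ?(brDl, brDr, brNl, brNr, br0l, br0r, trD1, trD2, trD3, trN1, trN2, trN3, tr01, tr02, tr03, alD, alN, al0, albr, altr, fD1, fD2, fN1, fN2, f01, f02, falr, gD1, gD2, gD3, gN1, gN2, gN3, g01, g02, g03, galr).
rewrite ?(trA x4 x3 x6).
rewrite ?(brDl, brDr, brNl, brNr, br0l, br0r, trD1, trD2, trD3, trN1, trN2, trN3, tr01, tr02, tr03, alD, alN, al0, albr, altr, fD1, fD2, fN1, fN2, f01, f02, falr, gD1, gD2, gD3, gN1, gN2, gN3, g01, g02, g03, galr).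
rewrite ?(brA (al (al x5)) (g x1 x2 x6)) ?(brA (al (al x5)) (g x3 x4 x6)) ?(brA (al (al x5)) (tr x1 x2 x6)) ?(brA (al (al x5)) (tr x3 x4 x6)) ?(brA (tr (al (al x1)) (al (al x2)) (al (al x5))) (g (al (al x3)) (al (al x4)) (al (al x6)))) ?(brA (tr (al (al x3)) (al (al x4)) (al (al x5))) (g (al (al x1)) (al (al x2)) (al (al x6)))) ?(trA (al (al (al x3))) (g (al x1) (al x2) (al x4)) (br (al (al x5)) (al (al x6)))) ?(trA (al (al (al x3))) (tr (al x1) (al x2) (al x4)) (f (al (al x5)) (al (al x6)))) ?(trA (al (al x3)) (g x1 x2 x4) (al (al x5))) ?(trA (al (al x3)) (g x1 x2 x4) (al (al x6))) ?(trA (al (al x3)) (tr x1 x2 x4) (al (al x5))) ?(trA (al (al x3)) (tr x1 x2 x4) (al (al x6))) ?(trA (al (al x4)) (al (al x3)) (tr x1 x2 x6)) ?(trA (al (al x4)) (tr x1 x2 x3) (al (al x6))).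
rewrite ?(brDl, brDr, brNl, brNr, br0l, br0r, trD1, trD2, trD3, trN1, trN2, trN3, tr01, tr02, tr03, alD, alN, al0, albr, altr, fD1, fD2, fN1, fN2, f01, f02, falr, gD1, gD2, gD3, gN1, gN2, gN3, g01, g02, g03, galr).
rewrite ?(brA (al (al (al (al x5)))) (tr (al (al x1)) (al (al x2)) (g x3 x4 x6))) ?(brA (al (al (al (al x5)))) (tr (al (al x3)) (al (al x4)) (g x1 x2 x6))) ?(brA (al (al (al (al x5)))) (tr (g x1 x2 x3) (al (al x4)) (al (al x6)))) ?(brA (al (al (al (al x5)))) (tr (g x1 x2 x4) (al (al x3)) (al (al x6)))) ?(fA (al (al (al (al x5)))) (tr (al (al x1)) (al (al x2)) (tr x3 x4 x6))) ?(fA (al (al (al (al x5)))) (tr (al (al x3)) (al (al x4)) (tr x1 x2 x6))) ?(fA (al (al (al (al x5)))) (tr (tr x1 x2 x3) (al (al x4)) (al (al x6)))) ?(fA (al (al (al (al x5)))) (tr (tr x1 x2 x4) (al (al x3)) (al (al x6)))).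
rewrite ?(brDl, brDr, brNl, brNr, br0l, br0r, trD1, trD2, trD3, trN1, trN2, trN3, tr01, tr02, tr03, alD, alN, al0, albr, altr, fD1, fD2, fN1, fN2, f01, f02, falr, gD1, gD2, gD3, gN1, gN2, gN3, g01, g02, g03, galr).
apply: (@iota_inj L); rewrite ?(iotaD, iotaN, iota0).
ring.
Qed.

Lemma p3b (g : L -> L -> L -> L) : HomC3 al g -> forall x1 x2 x3 x4 x5 x6 x7, deltaII3 tr al (deltaII2 tr al g) x1 x2 x3 x4 x5 x6 x7 = 0.
Proof.
move=> [[g1 g2 g3] gxx gal] x1 x2 x3 x4 x5 x6 x7.
have gD1 : forall a b c d, g (a + b) c d = g a c d + g b c d := fun a b c d => lin1D (g1 c d) a b.
have gD2 : forall a b c d, g c (a + b) d = g c a d + g c b d := fun a b c d => lin1D (g2 c d) a b.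
have gD3 : forall a b c d, g c d (a + b) = g c d a + g c d b := fun a b c d => lin1D (g3 c d) a b.
have gN1 : forall a c d, g (- a) c d = - g a c d := fun a c d => lin1N (g1 c d) a.
have gN2 : forall a c d, g c (- a) d = - g c a d := fun a c d => lin1N (g2 c d) a.
have gN3 : forall a c d, g c d (- a) = - g c d a := fun a c d => lin1N (g3 c d) a.
have g01 : forall c d, g 0 c d = 0 := fun c d => lin10 (g1 c d).
have g02 : forall c d, g c 0 d = 0 := fun c d => lin10 (g2 c d).
have g03 : forall c d, g c d 0 = 0 := fun c d => lin10 (g3 c d).
have galr : forall a b c, al (g a b c) = g (al a) (al b) (al c) := fun a b c => esym (gal a b c).
have gA : forall a b c, g a b c = - g b a c :=
  fun a b c => @antisym _ (fun x y => g x y c) (fun x y z => gD1 x y z c) (fun x y z => gD2 y z x c) (fun x => gxx x c) a b.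
rewrite /deltaII3 /deltaII2 /=.
apply: (use_neg (Hltr (al (al x4)) (al (al x3)) (g x5 x6 x7) (al (al x1)) (al (al x2)))).
apply: (use_neg (congr1 (fun w => (g w (al (al (al (al x6)))) (al (al (al (al x7)))))) (Hltr x3 x4 x5 x1 x2))).
apply: (use_pos (congr1 (fun w => (g w (al (al (al (al x5)))) (al (al (al (al x7)))))) (Hltr x3 x4 x6 x1 x2))).
apply: (use_neg (congr1 (fun w => (g (al (al (al (al x5)))) (al (al (al (al x6)))) w)) (Hltr x3 x4 x7 x1 x2))).
apply: (use_neg (Hltr (al (al x5)) (g x3 x4 x6) (al (al x7)) (al (al x1)) (al (al x2)))).
apply: (use_neg (Hltr (al (al x5)) (al (al x6)) (g x3 x4 x7) (al (al x1)) (al (al x2)))).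
apply: (use_pos (congr1 (fun w => (g (al (al (al (al x3)))) (al (al (al (al x4)))) w)) (Hltr x5 x6 x7 x1 x2))).
apply: (use_pos (Hltr (al (al x6)) (g x3 x4 x5) (al (al x7)) (al (al x1)) (al (al x2)))).
apply: (use_neg (Hltr (g x1 x2 x6) (al (al x5)) (al (al x7)) (al (al x3)) (al (al x4)))).
apply: (use_neg (Hltr (al (al x6)) (al (al x5)) (g x1 x2 x7) (al (al x3)) (al (al x4)))).
apply: (use_neg (congr1 (fun w => (g (al (al (al (al x1)))) (al (al (al (al x2)))) w)) (Hltr x5 x6 x7 x3 x4))).
apply: (use_pos (Hltr (g x1 x2 x5) (al (al x6)) (al (al x7)) (al (al x3)) (al (al x4)))).
apply: (use_pos (Hltr (al (al x5)) (al (al x6)) (al (al x7)) (g x1 x2 x3) (al (al x4)))).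
apply: (use_pos (Hltr (al (al x6)) (al (al x5)) (al (al x7)) (g x1 x2 x4) (al (al x3)))).
rewrite /=.
rewrite ?(brDl, brDr, brNl, brNr, br0l, br0r, trD1, trD2, trD3, trN1, trN2, trN3, tr01, tr02, tr03, alD, alN, al0, albr, altr, gD1, gD2, gD3, gN1, gN2, gN3, g01, g02, g03, galr).
rewrite ?(trA (al (al x6)) (al (al x5)) (al (al x7))).
rewrite ?(brDl, brDr, brNl, brNr, br0l, br0r, trD1, trD2, trD3, trN1, trN2, trN3, tr01, tr02, tr03, alD, alN, al0, albr, altr, gD1, gD2, gD3, gN1, gN2, gN3, g01, g02, g03, galr).
rewrite ?(gA (al (al x3)) (tr x1 x2 x4) (al (al x6))) ?(trA (al (al (al (al x3)))) (g (al (al x1)) (al (al x2)) (al (al x4))) (tr (al (al x5)) (al (al x6)) (al (al x7)))) ?(trA (al (al (al (al x3)))) (tr (al (al x1)) (al (al x2)) (al (al x4))) (g (al (al x5)) (al (al x6)) (al (al x7)))) ?(trA (al (al (al (al x4)))) (tr (al (al x1)) (al (al x2)) (al (al x3))) (g (al (al x5)) (al (al x6)) (al (al x7)))) ?(trA (al (al (al (al x5)))) (g (al (al x1)) (al (al x2)) (al (al x6))) (tr (al (al x3)) (al (al x4)) (al (al x7)))) ?(trA (al (al (al (al x5)))) (g (al (al x3)) (al (al x4)) (al (al x6))) (tr (al (al x1)) (al (al x2)) (al (al x7)))) ?(trA (al (al (al (al x5)))) (tr (al (al x1)) (al (al x2)) (al (al x6))) (g (al (al x3)) (al (al x4)) (al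 (al x7)))) ?(trA (al (al (al (al x5)))) (tr (al (al x3)) (al (al x4)) (al (al x6))) (g (al (al x1)) (al (al x2)) (al (al x7)))) ?(trA (al (al (al (al x6)))) (g (al (al x3)) (al (al x4)) (al (al x5))) (tr (al (al x1)) (al (al x2)) (al (al x7)))) ?(trA (al (al (al (al x6)))) (tr (al (al x3)) (al (al x4)) (al (al x5))) (g (al (al x1)) (al (al x2)) (al (al x7)))) ?(trA (al (al x3)) (g x1 x2 x4) (al (al x5))) ?(trA (al (al x3)) (g x1 x2 x4) (al (al x6))) ?(trA (al (al x3)) (g x1 x2 x4) (al (al x7))) ?(trA (al (al x3)) (tr x1 x2 x4) (al (al x5))) ?(trA (al (al x3)) (tr x1 x2 x4) (al (al x6))) ?(trA (al (al x3)) (tr x1 x2 x4) (al (al x7))) ?(trA (al (al x4)) (al (al x3)) (g x5 x6 x7)) ?(trA (al (al x5)) (g x1 x2 x6) (al (al x7))) ?(trA (al (al x5)) (g x3 x4 x6) (al (al x7))) ?(trA (al (al x5)) (tr x1 x2 x6) (al (al x7))) ?(trA (al (al x5)) (tr x3 x4 x6) (al (al x7))) ?(trA (al (al x6)) (al (al x5)) (g x1 x2 x7)) ?(trA (al (al x6)) (g x3 x4 x5) (al (al x7))) ?(trA (tr (al (al x1)) (al (al x2)) (al (al x5))) (g (al (al x3)) (al (al x4)) (al (al x6))) (al (al (al (al x7))))) ?(trA (tr (al (al x1)) (al (al x2)) (al (al x6))) (g (al (al x3)) (al (al x4)) (al (al x5))) (al (al (al (al x7))))) ?(trA (tr (al (al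 x3)) (al (al x4)) (al (al x5))) (g (al (al x1)) (al (al x2)) (al (al x6))) (al (al (al (al x7))))).
rewrite ?(brDl, brDr, brNl, brNr, br0l, br0r, trD1, trD2, trD3, trN1, trN2, trN3, tr01, tr02, tr03, alD, alN, al0, albr, altr, gD1, gD2, gD3, gN1, gN2, gN3, g01, g02, g03, galr).
rewrite ?(gA (al (al (al (al x5)))) (tr (al (al x1)) (al (al x2)) (tr x3 x4 x6)) (al (al (al (al x7))))) ?(gA (al (al (al (al x5)))) (tr (al (al x3)) (al (al x4)) (tr x1 x2 x6)) (al (al (al (al x7))))) ?(gA (al (al (al (al x5)))) (tr (tr x1 x2 x3) (al (al x4)) (al (al x6))) (al (al (al (al x7))))) ?(gA (al (al (al (al x5)))) (tr (tr x1 x2 x4) (al (al x3)) (al (al x6))) (al (al (al (al x7))))) ?(trA (al (al (al (al x4)))) (al (al (al (al x3)))) (tr (al (al x1)) (al (al x2)) (g x5 x6 x7))) ?(trA (al (al (al (al x5)))) (g (al (al x1)) (al (al x2)) (tr x3 x4 x6)) (al (al (al (al x7))))) ?(trA (al (al (al (al x5)))) (g (al (al x3)) (al (al x4)) (tr x1 x2 x6)) (al (al (al (al x7))))) ?(trA (al (al (al (al x5)))) (g (tr x1 x2 x3) (al (al x4)) (al (al x6))) (al (al (al (al x7))))) ?(trA (al (al (al (al x5)))) (g (tr x1 x2 x4) (al (al x3)) (al (al x6))) (al (al (al (al x7))))) ?(trA (al (al (al (al x5)))) (tr (al (al x1)) (al (al x2)) (g x3 x4 x6)) (al (al (al (al x7)))))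 ?(trA (al (al (al (al x5)))) (tr (g x1 x2 x3) (al (al x4)) (al (al x6))) (al (al (al (al x7))))) ?(trA (al (al (al (al x6)))) (al (al (al (al x5)))) (tr (al (al x3)) (al (al x4)) (g x1 x2 x7))) ?(trA (al (al (al (al x6)))) (al (al (al (al x5)))) (tr (g x1 x2 x4) (al (al x3)) (al (al x7)))) ?(trA (al (al (al (al x6)))) (tr (al (al x1)) (al (al x2)) (g x3 x4 x5)) (al (al (al (al x7))))) ?(trA (al (al (al (al x6)))) (tr (g x1 x2 x4) (al (al x3)) (al (al x5))) (al (al (al (al x7))))).
rewrite ?(brDl, brDr, brNl, brNr, br0l, br0r, trD1, trD2, trD3, trN1, trN2, trN3, tr01, tr02, tr03, alD, alN, al0, albr, altr, gD1, gD2, gD3, gN1, gN2, gN3, g01, g02, g03, galr).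
apply: (@iota_inj L); rewrite ?(iotaD, iotaN, iota0).
ring.
Qed.

End S.

Theorem mainTheorem2 (K : fieldType) (L : lmodType K)
  (br : L -> L -> L) (tr : L -> L -> L -> L) (al : L -> L) :
  HLYA br tr al ->
  [/\
   (forall f : L -> L, HomC1 al f ->
      (forall x y z u,
         deltaI2 br tr al (deltaI1 br f) (deltaII1 tr f) x y z u = 0) /\
      (forall x y u v w, deltaII2 tr al (deltaII1 tr f) x y u v w = 0)),
   (forall f : L -> L, HomC1 al f ->
      (forall x y z, dI2 br al (deltaI1 br f) (deltaII1 tr f) x y z = 0) /\
      (forall x y z u, dII2 br tr al (deltaI1 br f) (deltaII1 tr f) x y z u = 0))
  & (forall (f : L -> L -> L) (g : L -> L -> L -> L), HomC2 al f -> HomC3 al g ->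
      (forall x1 x2 x3 x4 x5 x6,
         deltaI3 br tr al (deltaI2 br tr al f g) (deltaII2 tr al g) x1 x2 x3 x4 x5 x6 = 0) /\
      (forall x1 x2 x3 x4 x5 x6 x7,
         deltaII3 tr al (deltaII2 tr al g) x1 x2 x3 x4 x5 x6 x7 = 0))].
Proof.
move=> H; split.
- by move=> f hf; split; [exact: (p1a H hf) | exact: (p1b H hf)].
- by move=> f hf; split; [exact: (p2a H hf) | exact: (p2b H hf)].
- by move=> f g hf hg; split; [exact: (p3a H hf hg) | exact: (p3b H hg)].
Qed.
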